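(* Let $V$ be a real vector space of dimension $m$, $\Gamma$ a finitely generated free abelian dense subgroup of $V$ acting by translations, and $\mathcal C$ a countable $\Gamma$-invariant collection of affine hyperplanes of $V$ with finitely many $\Gamma$-orbits and normals spanning $V$. Let $\mathcal W=\{W_1,\dots,W_f\}\subset\mathcal C$ with $f>m$ such that the set of normal directions of $W_1,\dots,W_f$ is indecomposable. Suppose that $\mathcal P$ consists of finitely many $\Gamma$-orbits. Then for every $0\le l\le m$ and every $A\in\mathcal I_l$, $$\mathrm{rk}\,\Gamma^A=l\,\frac{\mathrm{rk}\,\Gamma}{\dim V}.$$ In particular $\dim V$ divides $\mathrm{rk}\,\Gamma$.
   Context: $\mathcal P$ is the set of points that are $0$-dimensional intersections of $m$ elements of $\mathcal C$. For $A\subset\{1,\dots,f\}$, $W_A=\bigcap_{i\in A}W_i$, and $\Gamma^A\subset\Gamma$ is the stabilizer of $W_A$ (those $\gamma$ with $W_A+\gamma=W_A$). $\mathcal I_l$ is the collection of subsets $A\subset\{1,\dots,f\}$ with $m-l$ elements such that $W_A$ has dimension $l$. A finite set of pairwise non-parallel nonzero vectors spanning $V$ is indecomposable if it admits no partition $A_1\cup A_2$ into nonempty parts with $\mathrm{span}(A_1)\cap\mathrm{span}(A_2)=0$. *)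

(* Defs.v *)
From HB Require Import structures.
From mathcomp Require Import all_boot all_order all_algebra.
From mathcomp Require Import all_classical all_reals topology num_topology matrix_topology.
Import numFieldTopology.Exports.
Set Implicit Arguments. Unset Strict Implicit. Unset Printing Implicit Defensive.
Import Order.TTheory GRing.Theory Num.Theory.
Local Open Scope ring_scope.
Local Open Scope classical_set_scope.

(* V = R^m, realised as row vectors 'rV[R]_m. *)

Definition dotv (R : realType) (m : nat) (x y : 'rV[R]_m) : R := (x *m y^T) 0 0.

Definition is_normal (R : realType) (m : nat) (W : set 'rV[R]_m) (n : 'rV[R]_m) :=
  n != 0 /\ exists c : R, W = [set x | dotv x n = c].

Definition affine_hyperplane (R : realType) (m : nat) (W : set 'rV[R]_m) :=
  exists n, is_normal W n.

Definition translate (R : realType) (m : nat) (W : set 'rV[R]_m) (g : 'rV[R]_m) :=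
  [set x + g | x in W].

Definition zcomb (R : realType) (m k : nat) (gs : 'I_k -> 'rV[R]_m) (c : 'I_k -> int) :=
  \sum_(i < k) gs i *~ c i.

Definition zfree (R : realType) (m k : nat) (gs : 'I_k -> 'rV[R]_m) :=
  forall c : 'I_k -> int, zcomb gs c = 0 -> forall i, c i = 0.

Definition fg_free_subgroup (R : realType) (m : nat) (G : set 'rV[R]_m) :=
  exists k (gs : 'I_k -> 'rV[R]_m), zfree gs /\
    G = [set x | exists c : 'I_k -> int, x = zcomb gs c].

Definition is_rank (R : realType) (m : nat) (G : set 'rV[R]_m) (r : nat) :=
  (exists gs : 'I_r -> 'rV[R]_m, (forall i, G (gs i)) /\ zfree gs) /\
  (forall k (gs : 'I_k -> 'rV[R]_m), (forall i, G (gs i)) -> zfree gs -> (k <= r)%N).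

Definition affdim (R : realType) (m : nat) (S : set 'rV[R]_m) (l : nat) :=
  exists (p : 'rV[R]_m) (U : 'M[R]_m), \rank U = l /\ S = [set x | (x - p <= U)%MS].

(* A partition of the set of directions lifts to a partition S, ~: S of the
   indices; partitions of indices that split a class of parallel vectors have
   automatically nontrivially intersecting spans, so quantifying over all index
   partitions is the same as quantifying over partitions of the directions. *)
Definition span_rows (R : realType) (f m : nat) (ns : 'M[R]_(f, m)) (S : {set 'I_f}) :=
  (\sum_(i in S) <<row i ns>>)%MS.

Definition indecomposable (R : realType) (f m : nat) (ns : 'M[R]_(f, m)) :=
  (forall i, row i ns != 0) /\ row_full ns /\
  forall S : {set 'I_f}, (0 < #|S|)%N -> (#|S| < f)%N ->
    (span_rows ns S :&: span_rows ns (~: S))%MS != 0.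

Definition WA (R : realType) (m f : nat) (W : 'I_f -> set 'rV[R]_m) (A : {set 'I_f}) :=
  [set x | forall i, i \in A -> W i x].

Definition stabA (R : realType) (m f : nat) (G : set 'rV[R]_m)
  (W : 'I_f -> set 'rV[R]_m) (A : {set 'I_f}) :=
  [set g | G g /\ translate (WA W A) g = WA W A].

Definition Icoll (R : realType) (m f : nat) (W : 'I_f -> set 'rV[R]_m) (l : nat) :=
  [set A : {set 'I_f} | #|A| = (m - l)%N /\ affdim (WA W A) l].

Definition Ppoints (R : realType) (m : nat) (C : set (set 'rV[R]_m)) :=
  [set p | exists Ws : 'I_m -> set 'rV[R]_m,
     (forall i, C (Ws i)) /\ [set x | forall i, Ws i x] = [set p]].

Definition fin_orbits_sets (R : realType) (m : nat) (G : set 'rV[R]_m)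
  (C : set (set 'rV[R]_m)) :=
  exists (k : nat) (reps : 'I_k -> set 'rV[R]_m),
    forall W, C W -> exists i g, G g /\ W = translate (reps i) g.

Definition fin_orbits_points (R : realType) (m : nat) (G : set 'rV[R]_m)
  (P : set 'rV[R]_m) :=
  exists (k : nat) (reps : 'I_k -> 'rV[R]_m),
    forall p, P p -> exists i g, G g /\ p = reps i + g.

(* Main.v *)
Require Import Defs.
From HB Require Import structures.
From mathcomp Require Import all_boot all_order all_algebra.
From mathcomp Require Import boolp reals.
From mathcomp Require Import zify ring.
Set Implicit Arguments. Unset Strict Implicit. Unset Printing Implicit Defensive.
Import Order.TTheory GRing.Theory Num.Theory.
Local Open Scope ring_scope.

Lemma subspace_mx (F : fieldType) k (P : 'rV[F]_k -> Prop) :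
  P 0 -> (forall a u v, P u -> P v -> P (a *: u + v)) ->
  exists K : 'M[F]_k, forall v, (v <= K)%MS <-> P v.
Proof.
move=> P0 Pl.
suff: forall n (K : 'M[F]_k), (k - \rank K <= n)%N ->
   (forall v, (v <= K)%MS -> P v) -> exists K : 'M[F]_k, forall v, (v <= K)%MS <-> P v.
  move=> /(_ k 0%R); apply; first by rewrite leq_subr.
  by move=> v; rewrite submx0 => /eqP ->.
elim=> [|n IH] K Hn HK.
  exists K => v; split; first exact: HK.
  move=> _; apply: submx_full.
  by rewrite /row_full eqn_leq rank_leq_col /= -subn_eq0 -leqn0.
case: (pselect (exists v, P v /\ ~ (v <= K)%MS)) => [[v [Pv nv]]|nex]; last first.
  exists K => v; split; first exact: HK.
  move=> Pv; apply: contra_notP nex => nv; by exists v.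
apply: (IH (K + v)%MS).
  have: (K < K + v)%MS.
    rewrite ltmxE addsmxSl /=; apply/negP => H; apply: nv.
    exact: submx_trans (addsmxSr K v) H.
  move/rank_ltmx => lt; move: Hn; rewrite leq_subLR => Hn.
  rewrite leq_subLR; lia.
move=> u /sub_addsmxP [[u1 u2] /= ->].
rewrite [u2]mx11_scalar mul_scalar_mx addrC.
apply: Pl => //; apply: HK; exact: submxMl.
Qed.

Lemma memeq_rank (F : fieldType) k m1 m2 (A : 'M[F]_(m1, k)) (B : 'M[F]_(m2, k)) :
  (forall v : 'rV_k, (v <= A)%MS <-> (v <= B)%MS) -> \rank A = \rank B.
Proof.
move=> H; apply: eqmx_rank; apply/andP; split; apply/row_subP => i; apply/H => //;
  exact: row_sub.
Qed.

Definition intvec k (z : 'I_k -> int) : 'rV[rat]_k := \row_j (z j)%:~R.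

Lemma clear_den k (c : 'rV[rat]_k) :
  exists (q : rat) (z : 'I_k -> int), q != 0 /\ q *: c = intvec z.
Proof.
exists (\prod_j (denq (c 0 j))%:~R).
exists (fun j => numq (c 0 j) * \prod_(j' | j' != j) denq (c 0 j')).
split.
  apply/prodf_neq0 => j _; by rewrite intr_eq0 denq_neq0.
apply/rowP => j; rewrite !mxE (bigD1 j) //= intrM numqE.
have -> : ((\prod_(j' | j' != j) denq (c 0 j'))%:~R : rat) =
  \prod_(j' | j' != j) (denq (c 0 j'))%:~R by exact: rmorph_prod.
by rewrite mulrC -mulrA.
Qed.

Section Perp.
Variables (R : realType) (m : nat).

Definition perp (u : 'rV[R]_m) n (X : 'M[R]_(n, m)) : Prop := u *m X^T = 0.

Lemma perp_sub u n1 n2 (X : 'M_(n1, m)) (Y : 'M_(n2, m)) :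
  (X <= Y)%MS -> perp u Y -> perp u X.
Proof.
move=> /submxP [D ->]; rewrite /perp trmx_mul mulmxA => ->; exact: mul0mx.
Qed.

Lemma perp_adds u n1 n2 (X : 'M_(n1, m)) (Y : 'M_(n2, m)) :
  perp u (X + Y)%MS <-> perp u X /\ perp u Y.
Proof.
split.
  move=> H; split; apply: perp_sub H; [exact: addsmxSl | exact: addsmxSr].
move=> [HX HY]; apply: (@perp_sub _ _ _ _ (col_mx X Y)); first by rewrite addsmxE.
rewrite /perp tr_col_mx mul_mx_row HX HY; exact: row_mx0.
Qed.

Lemma perp_gen u n (X : 'M_(n, m)) : perp u <<X>>%MS <-> perp u X.
Proof. split; apply: perp_sub; by rewrite genmxE. Qed.

Lemma perp0 u n : perp u (0 : 'M_(n, m)).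
Proof. by rewrite /perp trmx0 mulmx0. Qed.

Lemma perp_full u n (X : 'M_(n, m)) : row_full X -> perp u X -> u = 0.
Proof.
rewrite -sub1mx => H /(perp_sub H); by rewrite /perp trmx1 mulmx1.
Qed.

Lemma perp_big u (I : finType) (P : pred I) (F : I -> 'M[R]_m) :
  perp u (\sum_(i | P i) F i)%MS <-> (forall i, P i -> perp u (F i)).
Proof.
split.
  move=> H i Pi; apply: perp_sub H; exact: (sumsmx_sup i).
move=> H; elim/big_ind: _ => //; first exact: perp0.
by move=> x y Hx Hy; apply/perp_adds.
Qed.

Lemma perp_row u (v : 'rV[R]_m) : perp u v <-> dotv u v = 0.
Proof.
rewrite /perp /dotv; split; first by move=> ->; rewrite mxE.
by move=> H; rewrite [u *m v^T]mx11_scalar H; by rewrite raddf0.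
Qed.

End Perp.

Section Gam.
Variables (R : realType) (m k : nat) (gs : 'I_k -> 'rV[R]_m).
Hypothesis zf : zfree gs.

Definition Mg : 'M[R]_(k, m) := \matrix_(j < k) gs j.
Definition phi (c : 'rV[rat]_k) : 'rV[R]_m := map_mx ratr c *m Mg.

Lemma phiD c d : phi (c + d) = phi c + phi d.
Proof. by rewrite /phi map_mxD mulmxDl. Qed.
Lemma phiN c : phi (- c) = - phi c.
Proof. by rewrite /phi map_mxN mulNmx. Qed.
Lemma phiB c d : phi (c - d) = phi c - phi d.
Proof. by rewrite phiD phiN. Qed.
Lemma phi0 : phi 0 = 0.
Proof. by rewrite /phi map_mx0 mul0mx. Qed.
Lemma phiZ q c : phi (q *: c) = ratr q *: phi c.
Proof. by rewrite /phi map_mxZ scalemxAl. Qed.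
Lemma phi_sum (I : finType) (P : pred I) (F : I -> 'rV_k) :
  phi (\sum_(i | P i) F i) = \sum_(i | P i) phi (F i).
Proof.
elim/big_rec2: _; first exact: phi0.
by move=> i y1 y2 _ <-; rewrite phiD.
Qed.
Lemma phiMz c z : phi (c *~ z) = phi c *~ z.
Proof. by rewrite -!scaler_int phiZ ratr_int. Qed.

Lemma zcomb_phi z : zcomb gs z = phi (intvec z).
Proof.
rewrite /phi /zcomb mulmx_sum_row; apply: eq_bigr => i _.
by rewrite !mxE ratr_int rowK scaler_int.
Qed.

Lemma phi_eq0 c : phi c = 0 -> c = 0.
Proof.
move=> H; have [q [z [q0 Hz]]] := clear_den c.
have : zcomb gs z = 0 by rewrite zcomb_phi -Hz phiZ H scaler0.
move/zf => z0.
have : q *: c = 0 by rewrite Hz; apply/rowP => j; rewrite !mxE z0.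
move/eqP; rewrite scaler_eq0 (negbTE q0) /=; by move/eqP.
Qed.

Lemma phi_inj : injective phi.
Proof. by move=> c d H; apply/eqP; rewrite -subr_eq0; apply/eqP/phi_eq0; rewrite phiB H subrr. Qed.

Lemma Sq_P0 n (X : 'M[R]_(n, m)) : perp (phi 0) X.
Proof. rewrite phi0 /perp; exact: mul0mx. Qed.
Lemma Sq_Pl n (X : 'M[R]_(n, m)) a u v :
  perp (phi u) X -> perp (phi v) X -> perp (phi (a *: u + v)) X.
Proof. by move=> Hu Hv; rewrite /perp phiD phiZ mulmxDl -scalemxAl Hu Hv scaler0 add0r. Qed.

Definition Sq n (X : 'M[R]_(n, m)) : 'M[rat]_k :=
  proj1_sig (cid (@subspace_mx _ k (fun c => perp (phi c) X) (Sq_P0 X) (@Sq_Pl n X))).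

Lemma SqP n (X : 'M[R]_(n, m)) c : (c <= Sq X)%MS <-> perp (phi c) X.
Proof. rewrite /Sq; case: cid => K HK /=; exact: HK. Qed.

Lemma Sq_le n1 n2 (X : 'M_(n1, m)) (Y : 'M_(n2, m)) : (X <= Y)%MS -> (Sq Y <= Sq X)%MS.
Proof.
move=> XY; apply/row_subP => i; apply/SqP; apply: (perp_sub XY); apply/SqP; exact: row_sub.
Qed.

Lemma rank_Sq_adds n1 n2 (X : 'M_(n1, m)) (Y : 'M_(n2, m)) :
  \rank (Sq (X + Y)%MS) = \rank (Sq X :&: Sq Y)%MS.
Proof.
apply: memeq_rank => v; rewrite sub_capmx; split.
  by move/SqP/perp_adds => [/SqP -> /SqP ->].
by move/andP => [/SqP HX /SqP HY]; apply/SqP/perp_adds.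
Qed.

Lemma Sq_full n (X : 'M_(n, m)) : row_full X -> Sq X = 0.
Proof.
move=> F; apply/eqP; rewrite -submx0; apply/row_subP => i.
rewrite submx0; apply/eqP/phi_eq0; apply: (perp_full F); apply/SqP; exact: row_sub.
Qed.

Lemma rank_Sq0 n : \rank (Sq (0 : 'M_(n, m))) = k.
Proof.
rewrite -{3}(mxrank1 rat k); apply: memeq_rank => v; split => _; last by apply/SqP; exact: perp0.
exact: submx1.
Qed.

End Gam.

Section Mat.
Variables (R : realType) (f m : nat) (ns : 'M[R]_(f, m)).
Hypothesis nz : forall i, row i ns != 0.

Local Notation span := (span_rows ns).
Definition indep (A : {set 'I_f}) := \rank (span A) = #|A|.

Lemma row_span i (A : {set 'I_f}) : i \in A -> (row i ns <= span A)%MS.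
Proof. move=> iA; apply: (sumsmx_sup i) => //; by rewrite genmxE. Qed.

Lemma span_mono (A B : {set 'I_f}) : A \subset B -> (span A <= span B)%MS.
Proof.
move=> AB; apply/sumsmx_subP => i iA; rewrite genmxE; apply: row_span.
exact: (subsetP AB).
Qed.

Lemma span_sub (A : {set 'I_f}) n (X : 'M_(n, m)) :
  (forall i, i \in A -> (row i ns <= X)%MS) -> (span A <= X)%MS.
Proof. by move=> H; apply/sumsmx_subP => i iA; rewrite genmxE; apply: H. Qed.

Lemma span0 : span set0 = 0.
Proof. by rewrite /span_rows big_set0. Qed.

Lemma span_U1 i (A : {set 'I_f}) : i \notin A ->
  span (i |: A) = (<<row i ns>> + span A)%MS.
Proof.
move=> iA; rewrite /span_rows (bigD1 i) ?setU11 //=; congr (_ + _)%MS.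
apply: eq_bigl => j; rewrite in_setU1; case: eqP => [->|] //=.
  by rewrite (negbTE iA).
by rewrite andbT.
Qed.

Lemma span_set1 i : span [set i] = <<row i ns>>%MS.
Proof. by rewrite /span_rows big_set1. Qed.

Lemma rank_row i : \rank (row i ns) = 1%N.
Proof.
apply/eqP; rewrite eqn_leq rank_leq_row lt0n mxrank_eq0; exact: nz.
Qed.

Lemma rank_span_le (A : {set 'I_f}) : (\rank (span A) <= #|A|)%N.
Proof.
rewrite -sum1_card /span_rows.
elim/big_rec2: _ => [|i y1 y2 _ H]; first by rewrite mxrank0.
apply: leq_trans (mxrank_adds_leqif _ _) _.
by rewrite mxrank_gen rank_row leq_add2l.
Qed.

Lemma span_split (B E : {set 'I_f}) : E \subset B ->
  span B = (span E + span (B :\: E))%MS.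
Proof.
move=> EB; rewrite /span_rows (bigID (fun i => i \in E)) /=; congr (_ + _)%MS.
  apply: eq_bigl => i; case iE: (i \in E); last by rewrite andbF.
  by rewrite (subsetP EB).
by apply: eq_bigl => i; rewrite in_setD andbC.
Qed.

Lemma indep_sub (B E : {set 'I_f}) : indep B -> E \subset B -> indep E.
Proof.
rewrite /indep => iB EB; apply/eqP; rewrite eqn_leq rank_span_le /=.
have := mxrank_adds_leqif (span E) (span (B :\: E)).
rewrite -span_split // iB => [[le _]].
have := rank_span_le (B :\: E); have := cardsID E B.
rewrite (setIidPr EB) => H1 H2. move: le; rewrite -H1. set a := #|E|. set b := #|B :\: E|. set c := \rank (span E). set d := \rank (span (B :\: E)). move=> le. lia.
Qed.

Lemma indep_U1 i (A : {set 'I_f}) : indep A -> ~~ (row i ns <= span A)%MS ->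
  indep (i |: A).
Proof.
rewrite /indep => iA ni.
have iA' : i \notin A by apply: contra ni => /row_span.
rewrite span_U1 // cardsU1 iA' add1n.
have := mxrank_sum_cap <<row i ns>>%MS (span A).
have := mxrank_leqif_sup (capmxSl <<row i ns>>%MS (span A)).
rewrite mxrank_gen rank_row iA => [[le eq]].
have : \rank (<<row i ns>> :&: span A)%MS != 1%N.
  rewrite eq; apply: contra ni => H.
  rewrite -genmxE; apply: submx_trans H _; exact: capmxSr.
lia.
Qed.

Lemma ext_basis (U A : {set 'I_f}) : A \subset U -> indep A ->
  exists B : {set 'I_f}, [/\ A \subset B, B \subset U, indep B & (span U <= span B)%MS].
Proof.
move: {2}#|U :\: A| (leqnn #|U :\: A|) => n; elim: n A => [|n IH] A Hn AU iA.
  exists A; split => //.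
  apply: span_sub => i iU; apply: row_span.
  move: Hn; rewrite leqn0 cards_eq0 => /eqP /setP /(_ i).
  by rewrite in_set0 in_setD iU andbT => /negbFE.
case: (pselect (exists i, i \in U /\ ~~ (row i ns <= span A)%MS)) => [[i [iU ni]]|nex].
  have iA' : i \notin A by apply: contra ni => /row_span.
  have [B [A'B BU iB spB]] : exists B : {set 'I_f}, [/\ i |: A \subset B, B \subset U, indep B
      & (span U <= span B)%MS].
    apply: IH; last exact: indep_U1.
      rewrite -ltnS; apply: leq_trans Hn; apply: proper_card.
      rewrite setUC -setDDl; apply: properD1.
      by rewrite in_setD iU iA'.
    by rewrite subUset sub1set iU.
  exists B; split => //; apply: subset_trans A'B; exact: subsetUr.
exists A; split => //.
apply: span_sub => i iU; apply: contra_notP nex => ni; exists i; split => //.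
by apply/negP.
Qed.

End Mat.

Lemma sum_split (I : finType) (d : I -> nat) (B X : {set I}) : X \subset B ->
  (\sum_(i in B) d i = \sum_(i in X) d i + \sum_(i in B :\: X) d i)%N.
Proof.
move=> XB; rewrite (bigID (fun i => i \in X)) /=; congr (_ + _)%N.
  apply: eq_bigl => i; case iX: (i \in X); last by rewrite andbF.
  by rewrite (subsetP XB).
by apply: eq_bigl => i; rewrite in_setD andbC.
Qed.

Lemma card_split (I : finType) (B X : {set I}) : X \subset B ->
  #|B| = (#|X| + #|B :\: X|)%N.
Proof. move=> XB; by rewrite -(cardsID X B) (setIidPr XB). Qed.

Lemma arith (a b e m v dj sE k : nat) : m = (a + e)%N -> m = (b + e.+1)%N ->
  (a * v + sE)%N = k -> (b * v + (dj + sE))%N = k -> dj = v.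
Proof.
move=> c1 c2; have -> : a = b.+1 by lia.
rewrite mulSn; lia.
Qed.

Section Conn.
Variables (R : realType) (f m : nat) (ns : 'M[R]_(f, m)).
Hypothesis ind : indecomposable ns.
Local Notation span := (span_rows ns).

Definition mbasis (B : {set 'I_f}) := indep ns B /\ row_full (span B).

Lemma basis_card B : mbasis B -> #|B| = m.
Proof. by move=> [iB /eqP fB]; rewrite -iB. Qed.

Lemma full_span n (X : 'M_(n, m)) :
  (forall i, (row i ns <= X)%MS) -> row_full X.
Proof.
move=> H; have [_ [rf _]] := ind; rewrite -sub1mx.
apply: submx_trans (_ : ns <= X)%MS; first by rewrite sub1mx.
by apply/row_subP.
Qed.

Lemma d_const (d : 'I_f -> nat) (k : nat) :
  (forall B, mbasis B -> (\sum_(i in B) d i)%N = k) -> forall i j, d i = d j.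
Proof.
have [nz [rf indS]] := ind.
move=> Hsum i0 j0; apply/eqP; apply: contraT => ne.
set v := d i0; set S := [set j | d j == v].
have i0S : i0 \in S by rewrite inE.
have j0S : j0 \notin S by rewrite inE eq_sym.
have : (span S :&: span (~: S))%MS != 0.
  apply: indS; first by apply/card_gt0P; exists i0.
  have : (#|S| < #|[set: 'I_f]|)%N.
    apply: proper_card; rewrite properT.
    by apply/eqP => ST; move: j0S; rewrite ST inE.
  by rewrite cardsT card_ord.
move=> NS; suff H0 : (span S :&: span (~: S))%MS == 0 by rewrite H0 in NS.
have [BX [_ BXS iBX spBX]] := ext_basis nz (sub0set S)
  (ltac:(by rewrite /indep span0 mxrank0 cards0)).
have [B [BXB BU iB spB]] := ext_basis nz (subsetUl BX (~: S)) iBX.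
have bB : mbasis B.
  split => //; apply: full_span => i.
  case iS: (i \in S).
    apply: submx_trans (row_span _ iS) _; apply: submx_trans spBX _.
    exact: span_mono.
  apply: submx_trans _ spB; apply: row_span; by rewrite in_setU in_setC iS orbT.
set E := B :\: BX.
have ES : E \subset ~: S.
  apply/subsetP => x; rewrite in_setD => /andP [xBX xB].
  by move: (subsetP BU x xB); rewrite in_setU (negbTE xBX).
have iE : indep ns E by apply: (indep_sub nz iB); rewrite /E subsetDl.
have dBX : forall i, i \in BX -> d i = v by move=> i /(subsetP BXS); rewrite inE => /eqP.
have HE : forall j, j \in ~: S -> (row j ns <= span E)%MS.
  move=> j jS; apply/negPn/negP => nj.
  have jE : j \notin E by apply: contra nj => /row_span.
  have ijE := indep_U1 nz iE nj.
  have [B2 [jEB2 B2U iB2 spB2]] := ext_basis nz (setUS [set j] (subsetDl B BX)) ijE.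
  have bB2 : mbasis B2.
    split => //; have [_ fB] := bB; rewrite -sub1mx; apply: submx_trans spB2.
    apply: submx_trans (span_mono _ (subsetUr _ _)); by rewrite sub1mx.
  have jBX : j \notin BX.
    by apply/negP => /(subsetP BXS); move: jS; rewrite in_setC => /negP.
  have e2 : B2 :\: BX = j |: E.
    apply/eqP; rewrite eqEsubset; apply/andP; split.
      apply/subsetP => x; rewrite in_setD => /andP [xBX xB2].
      move: (subsetP B2U x xB2); rewrite !in_setU1 in_setD xBX /=.
      by case: (x == j) => //=.
    apply/subsetP => x xjE; rewrite in_setD (subsetP jEB2 x xjE) andbT.
    move: xjE; rewrite in_setU1 => /orP [/eqP -> //|]; by rewrite in_setD => /andP [].
  have s1 := Hsum B bB; have s2 := Hsum B2 bB2.
  rewrite (sum_split d (subsetIl B2 BX)) in s2.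
  rewrite (sum_split d BXB) in s1.
  have e3 : B2 :\: (B2 :&: BX) = B2 :\: BX by rewrite setDIr setDv set0U.
  rewrite e3 e2 big_setU1 //= in s2.
  rewrite (eq_bigr (fun _ => v) dBX) sum_nat_const in s1.
  rewrite (eq_bigr (fun _ => v)) ?sum_nat_const in s2; last first.
    by move=> i; rewrite in_setI => /andP [_ /dBX].
  have c1 := card_split BXB; have c2 := card_split (subsetIl B2 BX).
  rewrite e3 e2 cardsU1 jE in c2.
  rewrite (basis_card bB) in c1; rewrite (basis_card bB2) in c2.
  move: jS; rewrite in_setC inE => /eqP; apply.
  set a := #|BX| in c1 s1; set b := #|B2 :&: BX| in c2 s2.
  set sE := (\sum_(i in E) d i)%N in s1 s2.
  rewrite -/E in c1; move: c2; rewrite /= add1n => c2.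
  exact: (arith c1 c2 s1 s2).
have : (span (~: S) <= span E)%MS by apply: span_sub.
move/mxrankS; rewrite iE => rS.
have rSX : \rank (span S) = #|BX|.
  rewrite -iBX; apply/eqP; rewrite eqn_leq (mxrankS spBX) mxrankS //.
  exact: span_mono.
have fS : row_full (span S + span (~: S))%MS.
  apply: full_span => i; case iS: (i \in S).
    apply: submx_trans (addsmxSl _ _); exact: row_span.
  apply: submx_trans (addsmxSr _ _); apply: row_span; by rewrite in_setC iS.
have := mxrank_sum_cap (span S) (span (~: S)); move: fS => /eqP ->.
have := card_split BXB; rewrite (basis_card bB) -/E rSX.
rewrite -mxrank_eq0.
set x := \rank (span S :&: span (~: S))%MS; set y := \rank (span (~: S)).
move=> c e; apply/eqP; lia.
Qed.

End Conn.

Lemma arith2 (k x y c s : nat) : (x <= k)%N -> (y <= k)%N -> (c + s = x + y)%N ->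
  c = k -> (k - s = (k - x) + (k - y))%N.
Proof. lia. Qed.

Section Sum.
Variables (R : realType) (m k f : nat) (gs : 'I_k -> 'rV[R]_m) (ns : 'M[R]_(f, m)).
Hypothesis zf : zfree gs.
Hypothesis nz : forall i, row i ns != 0.
Local Notation span := (span_rows ns).
Definition dd i := (k - \rank (Sq gs <<row i ns>>%MS))%N.

Hypothesis orb : forall B i, mbasis ns B -> i \in B ->
  row_full (Sq gs <<row i ns>>%MS + Sq gs (span (B :\ i)))%MS.

Lemma sum_sub B : mbasis ns B -> forall A : {set 'I_f}, A \subset B ->
  (k - \rank (Sq gs (span A)) = \sum_(i in A) dd i)%N.
Proof.
move=> bB A; move: {2}#|A| (erefl #|A|) => n; elim: n A => [|n IH] A cA AB.
  move: cA => /eqP; rewrite cards_eq0 => /eqP ->.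
  by rewrite span0 rank_Sq0 subnn big_set0.
have [i iA] : exists i, i \in A.
  apply/set0Pn; apply/negP => /eqP A0; by move: cA; rewrite A0 cards0.
have iA' : i \notin A :\ i by rewrite in_setD1 eqxx.
have eA : A = i |: (A :\ i) by rewrite setD1K.
have cA' : #|A :\ i| = n by move: cA; rewrite {1}eA cardsU1 iA' add1n => -[].
have IH' := IH (A :\ i) cA' (subset_trans (subsetDl A [set i]) AB).
rewrite eA span_U1 // big_setU1 //= -IH' rank_Sq_adds.
have := mxrank_sum_cap (Sq gs <<row i ns>>%MS) (Sq gs (span (A :\ i))).
have full : row_full (Sq gs <<row i ns>>%MS + Sq gs (span (A :\ i)))%MS.
  rewrite -sub1mx; apply: submx_trans
   (_ : 1%:M <= Sq gs <<row i ns>>%MS + Sq gs (span (B :\ i)))%MS _.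
    by rewrite sub1mx; apply: orb bB (subsetP AB i iA).
  apply: addsmxS => //; apply: Sq_le; apply: span_mono; exact: setSD.
move: full => /eqP full.
move=> H; rewrite /dd; apply: arith2 H full; exact: rank_leq_col.
Qed.
End Sum.

From mathcomp Require Import all_classical all_reals topology num_topology matrix_topology.
Import numFieldTopology.Exports.
Import Order.TTheory GRing.Theory Num.Theory.
Local Open Scope ring_scope.
Local Open Scope classical_set_scope.

Section Rk.
Variables (R : realType) (m k : nat) (gs : 'I_k -> 'rV[R]_m).
Hypothesis zf : zfree gs.

Lemma zcomb_phi_sum n (z : 'I_n -> 'I_k -> int) (a : 'I_n -> int) :
  zcomb (fun t => zcomb gs (z t)) a = phi gs (intvec a *m \matrix_t intvec (z t)).
Proof.
rewrite /zcomb mulmx_sum_row phi_sum; apply: eq_bigr => t _.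
by rewrite rowK mxE scaler_int phiMz -zcomb_phi.
Qed.

Lemma rank_grp (K : 'M[rat]_k) :
  is_rank [set x | exists z, x = zcomb gs z /\ (intvec z <= K)%MS] (\rank K).
Proof.
split.
  set Bm := row_base K.
  have H : forall t, exists qz : rat * ('I_k -> int),
      qz.1 != 0 /\ qz.1 *: row t Bm = intvec qz.2.
    move=> t; have [q [z [q0 Hz]]] := clear_den (row t Bm); by exists (q, z).
  have [g Hg] := choice H.
  exists (fun t => zcomb gs (g t).2); split.
    move=> t; exists (g t).2; split => //.
    have [_ <-] := Hg t; apply: scalemx_sub.
    by rewrite -(eq_row_base K) row_sub.
  move=> a; rewrite zcomb_phi_sum => /(phi_eq0 zf) H0.
  have E : \matrix_t intvec (g t).2 = diag_mx (\row_t (g t).1) *m Bm.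
    apply/row_matrixP => t; rewrite rowK row_mul row_diag_mx mxE.
    by have [_ <-] := Hg t; rewrite -scalemxAl -rowE.
  move: H0; rewrite E mulmxA -(mul0mx _ Bm) => /(row_free_inj (row_base_free K)).
  move=> /rowP H0 t; move: (H0 t).
  rewrite !mxE (bigD1 t) //= big1 ?addr0; last first.
    by move=> i /negbTE ni; rewrite !mxE ni mulr0n mulr0.
  rewrite !mxE eqxx mulr1n => /eqP; rewrite mulf_eq0 intr_eq0.
  by have [/negbTE -> _] := Hg t; rewrite orbF => /eqP.
move=> n hs Hin zh.
have [z Hz] := choice Hin.
set Cm := \matrix_t intvec (z t).
have CK : (Cm <= K)%MS by apply/row_subP => t; rewrite rowK; have [_ ->] := Hz t.
suff : row_free Cm.
  by move=> /eqP rf; rewrite -{1}rf; exact: mxrankS.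
apply/inj_row_free => v Hv.
have [q [a [q0 Ha]]] := clear_den v.
have E : hs = fun t => zcomb gs (z t).
  by apply: funext => t; have [-> _] := Hz t.
have : zcomb hs a = 0.
  by rewrite E zcomb_phi_sum -Ha -scalemxAl Hv scaler0 phi0.
move/zh => a0.
have : q *: v = 0 by rewrite Ha; apply/rowP => j; rewrite !mxE a0.
move/eqP; rewrite scaler_eq0 (negbTE q0) /=; by move/eqP.
Qed.

End Rk.

Section Dot.
Variables (R : realType) (m : nat).
Lemma dotvD (u v w : 'rV[R]_m) : dotv (u + v) w = dotv u w + dotv v w.
Proof. by rewrite /dotv mulmxDl mxE. Qed.
Lemma dotvN (u w : 'rV[R]_m) : dotv (- u) w = - dotv u w.
Proof. by rewrite /dotv mulNmx mxE. Qed.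
Lemma dotvB (u v w : 'rV[R]_m) : dotv (u - v) w = dotv u w - dotv v w.
Proof. by rewrite dotvD dotvN. Qed.
Lemma dotvZ a (u w : 'rV[R]_m) : dotv (a *: u) w = a * dotv u w.
Proof. by rewrite /dotv -scalemxAl mxE. Qed.
Lemma dotvMz (u w : 'rV[R]_m) z : dotv (u *~ z) w = dotv u w *~ z.
Proof. by rewrite -!scaler_int dotvZ mulrzl. Qed.
Lemma mulmx_tr_dot n (x : 'rV[R]_m) (A : 'M[R]_(n, m)) t :
  (x *m A^T) 0 t = dotv x (row t A).
Proof. rewrite /dotv !mxE; apply: eq_bigr => j _; by rewrite !mxE. Qed.
End Dot.

Section Orbit.
Variables (R : realType) (m k f : nat) (gs : 'I_k -> 'rV[R]_m) (ns : 'M[R]_(f, m))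
  (C : set (set 'rV[R]_m)) (W : 'I_f -> set 'rV[R]_m) (cc : 'I_f -> R).
Local Notation Gamma := [set x | exists c, x = zcomb gs c].
Hypothesis zf : zfree gs.
Hypothesis nz : forall i, row i ns != 0.
Hypothesis WE : forall i, W i = [set x | dotv x (row i ns) = cc i].
Hypothesis WC : forall i, C (W i).
Hypothesis Cinv : forall H g, C H -> Gamma g -> C (translate H g).
Hypothesis fo : fin_orbits_points Gamma (Ppoints C).
Local Notation span := (span_rows ns).

Lemma in_translate (H : set 'rV[R]_m) g x : translate H g x <-> H (x - g).
Proof.
split; first by move=> [y Hy <-]; rewrite addrK.
by move=> Hx; exists (x - g) => //; rewrite subrK.
Qed.

Lemma orbit_int B i (z : 'I_k -> int) : mbasis ns B -> i \in B ->
  (intvec z <= Sq gs <<row i ns>>%MS + Sq gs (span (B :\ i)))%MS.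
Proof.
move=> bB iB.
have HB : #|B| = m by exact: basis_card bB.
pose e (t : 'I_m) : 'I_f := enum_val (cast_ord (esym HB) t).
have eB : forall t, e t \in B by move=> t; exact: enum_valP.
have esurj : forall j, j \in B -> exists t, e t = j.
  move=> j jB; exists (cast_ord HB (enum_rank_in jB j)).
  by rewrite /e cast_ordK enum_rankK_in.
pose NB : 'M[R]_m := \matrix_t row (e t) ns.
have NBu : NB^T \in unitmx.
  rewrite unitmx_tr -row_full_unit -sub1mx.
  have [_ fB] := bB; apply: submx_trans (_ : span B <= NB)%MS; first by rewrite sub1mx.
  apply: span_sub => j /esurj [t <-]; rewrite -(rowK (fun t => row (e t) ns) t).
  exact: row_sub.
set gam := zcomb gs z.
pose T (N : nat) : 'rV[R]_m :=
  \row_t (cc (e t) + (e t == i)%:R * (N%:R * dotv gam (row i ns))).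
pose p N := T N *m invmx NB^T.
pose zN (N : nat) := fun j => z j * N%:Z.
have gN : forall N, zcomb gs (zN N) = gam *~ N%:Z.
  move=> N; rewrite /gam !zcomb_phi -phiMz; congr phi.
  by apply/rowP => j; rewrite /zN -scaler_int !mxE intrM mulrC.
pose Ws N (t : 'I_m) := if e t == i then translate (W (e t)) (zcomb gs (zN N)) else W (e t).
have Pp : forall N, Ppoints C (p N).
  move=> N; exists (Ws N); split.
    move=> t; rewrite /Ws; case: ifP => _; last exact: WC.
    apply: Cinv => //; by exists (zN N).
  apply/seteqP; split => x /=.
    move=> Hx; rewrite /p; apply/(canRL (mulmxK NBu)).
    apply/rowP => t; rewrite mulmx_tr_dot rowK mxE; move: (Hx t); rewrite /Ws.
    case: ifP => eti.
      move/in_translate; rewrite WE /= dotvB gN dotvMz (eqP eti) => H.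
      by rewrite -H mul1r [_%:R * _]mulrC mulr_natr pmulrn subrK.
    by rewrite WE /= => ->; rewrite mul0r addr0.
  move=> -> t; rewrite /Ws.
  have : (p N *m NB^T) 0 t = T N 0 t by rewrite /p mulmxKV.
  rewrite mulmx_tr_dot rowK mxE.
  case: ifP => eti.
    move=> H; apply/in_translate; rewrite WE /= dotvB H gN dotvMz (eqP eti).
    by rewrite mul1r [_%:R * _]mulrC mulr_natr pmulrn addrK.
  by rewrite WE /= => ->; rewrite mul0r addr0.
have [k0 [reps Hreps]] := fo.
have H2 : forall N : 'I_k0.+1, exists pr : 'I_k0 * 'rV[R]_m,
    Gamma pr.2 /\ p N = reps pr.1 + pr.2.
  move=> N; have [j [g [Gg ->]]] := Hreps _ (Pp N); by exists (j, g).
have [F HF] := choice H2.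
have : ~~ injectiveb (fun N => (F N).1).
  apply/negP => /injectiveP /leq_card; by rewrite !card_ord ltnn.
move=> /injectivePn [N1 [N2 N12 FN]].
have [[w1 Hw1] E1] := HF N1; have [[w2 Hw2] E2] := HF N2.
have Ediff : p N1 - p N2 = phi gs (intvec w1 - intvec w2).
  by rewrite E1 E2 FN phiB -!zcomb_phi -Hw1 -Hw2 opprD addrACA subrr add0r.
set c1 := intvec w1 - intvec w2 in Ediff.
have Tdiff : forall t, dotv (phi gs c1) (row (e t) ns) =
    (e t == i)%:R * ((N1%:R - N2%:R) * dotv gam (row i ns)).
  move=> t; rewrite -Ediff -(rowK (fun t => row (e t) ns) t) -mulmx_tr_dot.
  rewrite mulmxBl /p !mulmxKV // !mxE; ring.
have c1Y : (c1 <= Sq gs (span (B :\ i)))%MS.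
  apply/SqP/perp_big => j; rewrite in_setD1 => /andP [ji jB].
  apply/perp_gen/perp_row; have [t et] := esurj j jB.
  by rewrite -et Tdiff et (negbTE ji) mul0r.
pose q : rat := N1%:R - N2%:R.
have q0 : q != 0.
  rewrite /q subr_eq0 eqr_nat; exact: N12.
pose c2 := q *: intvec z - c1.
have c2X : (c2 <= Sq gs <<row i ns>>%MS)%MS.
  apply/SqP/perp_gen/perp_row.
  have [t et] := esurj i iB.
  rewrite /c2 phiB phiZ dotvB dotvZ -et Tdiff et eqxx mul1r -zcomb_phi -/gam.
  by rewrite /q rmorphB /= !ratr_nat subrr.
have : (q *: intvec z <= Sq gs <<row i ns>>%MS + Sq gs (span (B :\ i)))%MS.
  have -> : q *: intvec z = c2 + c1 by rewrite /c2 subrK.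
  apply: addmx_sub; [apply: submx_trans c2X _; exact: addsmxSl
                    | apply: submx_trans c1Y _; exact: addsmxSr].
move/(scalemx_sub q^-1); by rewrite scalerA mulVf // scale1r.
Qed.

Lemma orbit_full B i : mbasis ns B -> i \in B ->
  row_full (Sq gs <<row i ns>>%MS + Sq gs (span (B :\ i)))%MS.
Proof.
move=> bB iB; rewrite -sub1mx; apply/row_subP => j.
have [q [z [q0 Hz]]] := clear_den (row j 1%:M : 'rV[rat]_k).
have := orbit_int z bB iB; rewrite -Hz => /(scalemx_sub q^-1).
by rewrite scalerA mulVf // scale1r.
Qed.

End Orbit.

Lemma arith3 (k m l dv rA : nat) : k = (m * dv)%N -> (l <= m)%N ->
  (k - rA = (m - l) * dv)%N -> (rA <= k)%N -> (rA * m = l * k)%N.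
Proof.
move=> -> lm e rk.
have -> : rA = (l * dv)%N.
  have : (m * dv = (m - l) * dv + l * dv)%N by rewrite -mulnDl subnK.
  lia.
by rewrite mulnAC mulnA [(l * m)%N]mulnC.
Qed.

Theorem mainTheorem6 (R : realType) (m : nat)
  (Gamma : set 'rV[R]_m) (C : set (set 'rV[R]_m))
  (f : nat) (W : 'I_f -> set 'rV[R]_m) :
  (* Gamma: finitely generated free abelian dense subgroup *)
  fg_free_subgroup Gamma ->
  dense Gamma ->
  (* C: countable Gamma-invariant collection of affine hyperplanes *)
  countable C ->
  (forall H, C H -> affine_hyperplane H) ->
  (forall H g, C H -> Gamma g -> C (translate H g)) ->
  fin_orbits_sets Gamma C ->
  (* normals of elements of C span V *)
  (exists (k : nat) (Hs : 'I_k -> set 'rV[R]_m) (ns : 'M[R]_(k, m)),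
      (forall i, C (Hs i)) /\ (forall i, is_normal (Hs i) (row i ns)) /\ row_full ns) ->
  (* W = {W_1, ..., W_f} subset of C, f > m *)
  injective W ->
  (forall i, C (W i)) ->
  (m < f)%N ->
  (exists ns : 'M[R]_(f, m),
      (forall i, is_normal (W i) (row i ns)) /\ indecomposable ns) ->
  fin_orbits_points Gamma (Ppoints C) ->
  exists r : nat, is_rank Gamma r /\ (m %| r)%N /\
    forall (l : nat) (A : {set 'I_f}), (l <= m)%N -> Icoll W l A ->
      exists rA : nat, is_rank (stabA Gamma W A) rA /\ (rA * m = l * r)%N.
Proof.
move=> [k [gs [zf GE]]] _ _ _ Cinv _ _ _ WC mf [ns [Hn ind]] fo.
subst Gamma.
have [cc WE] := fin_all_exists (fun i => (Hn i).2).
have nz : forall i, row i ns != 0 by have [nz _] := ind.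
have orb := orbit_full WE WC Cinv fo.
have Hsum : forall B, mbasis ns B -> (\sum_(i in B) dd gs ns i)%N = k.
  move=> B bB; rewrite -(sum_sub orb bB (subxx B)).
  by have [_ fB] := bB; rewrite (Sq_full zf fB) mxrank0 subn0.
have dc := d_const ind Hsum.
have i0 : 'I_f := Ordinal mf.
set dv := dd gs ns i0.
have [B0 [_ _ iB0 spB0]] := ext_basis nz (finset.sub0set [set: 'I_f])
  (ltac:(by rewrite /indep span0 mxrank0 cards0)).
have bB0 : mbasis ns B0.
  split => //; apply: (full_span ind) => i; apply: submx_trans spB0.
  by apply: row_span; rewrite inE.
have km : k = (m * dv)%N.
  rewrite -(Hsum B0 bB0) (eq_bigr (fun _ => dv)) ?sum_nat_const ?(basis_card bB0) //.
  by move=> i _; rewrite /dv (dc i i0).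
exists k; split.
  have := rank_grp zf 1%:M; rewrite mxrank1.
  congr is_rank; apply/seteqP; split => x /=.
    by move=> [z [-> _]]; exists z.
  by move=> [z ->]; exists z; rewrite submx1.
split; first by rewrite km dvdn_mulr.
move=> l A lm [cA [p [U [rU WAE]]]].
have pW : WA W A p by rewrite WAE /= subrr sub0mx.
have WAc : forall y, WA W A y <-> forall i, i \in A -> dotv y (row i ns) = cc i.
  by move=> y; split => H i iA; move: (H i iA); rewrite WE.
have dirA : forall v, WA W A (p + v) <-> perp v (span_rows ns A).
  move=> v; rewrite WAc; split.
    move=> H; apply/perp_big => i iA; apply/perp_gen/perp_row.
    by move: (H i iA); rewrite dotvD (proj1 (WAc p) pW i iA) => E; apply: (addrI (cc i)); rewrite E addr0.
  move=> /perp_big H i iA; move: (H i iA) => /perp_gen/perp_row.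
  by rewrite dotvD (proj1 (WAc p) pW i iA) => ->; rewrite addr0.
have iA : indep ns A.
  have rU' : \rank U = (m - \rank (span_rows ns A))%N.
    rewrite -(mxrank_tr (span_rows ns A)) -mxrank_ker; apply: memeq_rank => v.
    have : (v <= U)%MS <-> perp v (span_rows ns A).
      by rewrite -dirA WAE /= [p + v]addrC addrK.
    move=> [H1 H2]; split => Hv; [apply/sub_kermxP; exact: H1 | apply: H2; exact/sub_kermxP].
  rewrite /indep; have := rank_leq_col (span_rows ns A); lia.
have [B [AB _ iB spB]] := ext_basis nz (finset.subsetT A) iA.
have bB : mbasis ns B.
  split => //; apply: (full_span ind) => i; apply: submx_trans spB.
  by apply: row_span; rewrite inE.
have sA := sum_sub orb bB AB.
rewrite (eq_bigr (fun _ => dv)) ?sum_nat_const in sA; last first.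
  by move=> i _; rewrite /dv (dc i i0).
exists (\rank (Sq gs (span_rows ns A))); split.
  have := rank_grp zf (Sq gs (span_rows ns A)).
  congr is_rank; apply/seteqP; split => x /=.
    move=> [z [-> Hz]]; split; first by exists z.
    have Hp : forall i, i \in A -> dotv (zcomb gs z) (row i ns) = 0.
      move=> i iA'; move: Hz => /SqP /perp_big /(_ i iA') /perp_gen /perp_row.
      by rewrite zcomb_phi.
    apply/seteqP; split => y /=.
      move=> /in_translate /WAc H; apply/WAc => i iA'.
      by move: (H i iA'); rewrite dotvB Hp // subr0.
    move=> /WAc H; apply/in_translate/WAc => i iA'.
    by rewrite dotvB Hp // subr0; apply: H.
  move=> [[z ->] Ht]; exists z; split => //.
  apply/SqP; rewrite -zcomb_phi; apply/dirA; rewrite -Ht.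
  by exists p => //; rewrite addrC.
apply: arith3 km lm _ (rank_leq_col _).
by rewrite sA cA.
Qed.
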